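(* Let $\phi$ be the Brier scoring rule, whose negative entropy is $h(p)=\|p\|^2-1$, so that for random vectors $U,V$ in $\mathbb{R}^K$, $\mathrm{Var}_h(U\mid V)=\mathbb{E}[\|U\|^2\mid V]-\|\mathbb{E}[U\mid V]\|^2$. Let $C:=\mathbb{E}[Q\mid S]$, $S_B$ a binned version of $S$ and $C_B:=\mathbb{E}[Q\mid S_B]$. Then $$\underbrace{\mathbb{E}\big[\|S_B-C_B\|^2\big]}_{\mathrm{CL}(S_B)}=\underbrace{\mathbb{E}\big[\|S-C\|^2\big]}_{\mathrm{CL}(S)}\;\underbrace{-\;\mathbb{E}\big[\mathrm{Var}_h(S-C\mid S_B)\big]}_{\mathrm{CL}_{\mathrm{induced}}(S,S_B)}.$$
   Context: Let $(X,Y)$ be jointly distributed with $X\in\mathcal{X}$ and $Y\in\{e_1,\dots,e_K\}$ (one-hot vectors of $\mathbb{R}^K$); $\Delta_K$ is the probability simplex; $Q\in\Delta_K$ with $Q_k:=P(Y=e_k\mid X)$; $S=f(X)\in\Delta_K$ for a classifier $f$. Binned classifier: given a partition $\{\mathcal{B}_j\}_{1\le j\le J}$ of $\Delta_K$, $S_B$ equals $\mathbb{E}[S\mid S\in\mathcal{B}_j]$ on $\{S\in\mathcal{B}_j\}$. $\|\cdot\|$ is the Euclidean norm. *)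

(* Defs.v *)
From HB Require Import structures.
From mathcomp Require Import all_boot all_order all_algebra.
From mathcomp Require Import all_classical all_reals all_analysis.
Set Implicit Arguments. Unset Strict Implicit. Unset Printing Implicit Defensive.
Import Order.TTheory GRing.Theory Num.Theory.
Local Open Scope classical_set_scope.
Local Open Scope ring_scope.

Section Defs.
Variables (R : realType) (K : nat).

(* Borel sigma-algebra on R^K (= product sigma-algebra generated by coordinates) *)
Definition vec_measurable : set (set ('I_K -> R)) :=
  <<s \bigcup_(k in [set: 'I_K])
        preimage_set_system setT (fun p : 'I_K -> R => p k) (@measurable _ R) >>.

Definition simplex : set ('I_K -> R) :=
  [set p | (forall k, 0 <= p k) /\ \sum_(k < K) p k = 1].

Definition vsub (p q : 'I_K -> R) : 'I_K -> R := fun k => p k - q k.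

Definition sqnorm (p : 'I_K -> R) : R := \sum_(k < K) p k ^+ 2.

Definition simplex_partition (J : nat) (B : 'I_J -> set ('I_K -> R)) : Prop :=
  [/\ forall j, vec_measurable (B j),
      forall j, B j `<=` simplex,
      forall i j, i != j -> B i `&` B j = set0 &
      simplex `<=` \bigcup_(j in [set: 'I_J]) B j].

Variables (d : measure_display) (T : measurableType d) (P : probability T R).

Definition sigma_vec (V : T -> 'I_K -> R) : set (set T) :=
  preimage_set_system setT V vec_measurable.

Definition sigma_rv (dX : measure_display) (X' : measurableType dX) (V : T -> X')
  : set (set T) := preimage_set_system setT V measurable.

Definition is_cexp (G : set (set T)) (Y Z : T -> R) : Prop :=
  [/\ forall A, measurable A -> G (setT `&` Z @^-1` A),
      P.-integrable setT (EFin \o Z) &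
      forall A, G A -> (\int[P]_(x in A) (Y x)%:E = \int[P]_(x in A) (Z x)%:E)%E].

Definition is_cexp_vec (G : set (set T)) (Y Z : T -> 'I_K -> R) : Prop :=
  forall k, is_cexp G (fun t => Y t k) (fun t => Z t k).

Definition bin_mean (S : T -> 'I_K -> R) (Bj : set ('I_K -> R)) : 'I_K -> R :=
  fun k => fine (\int[P]_(x in S @^-1` Bj) (S x k)%:E)%E / fine (P (S @^-1` Bj)).

Definition binned (J : nat) (B : 'I_J -> set ('I_K -> R)) (S : T -> 'I_K -> R)
  : T -> 'I_K -> R :=
  fun t k => \sum_(j < J) \1_(S @^-1` B j) t * bin_mean S (B j) k.

End Defs.

(* Main.v *)
Require Import Defs.
From HB Require Import structures.
From mathcomp Require Import all_boot all_order all_algebra.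
From mathcomp Require Import all_classical all_reals all_analysis.
From mathcomp Require Import measurable_realfun.
Import Order.TTheory GRing.Theory Num.Theory.
Local Open Scope classical_set_scope.
Local Open Scope ring_scope.

Section VM.
Variables (R : realType) (K : nat).
Local Notation vm := (@vec_measurable R K).

Lemma vmG k (A : set R) : measurable A -> vm [set p | A (p k)].
Proof.
move=> mA; rewrite /vec_measurable; apply: sub_sigma_algebra; exists k => //; exists A => //.
by rewrite setTI.
Qed.

Lemma vmC (A : set ('I_K -> R)) : vm A -> vm (~` A).
Proof. by move=> /sigma_algebraCD; rewrite setTD. Qed.

Lemma vmT : vm setT.
Proof. by rewrite -setC0; apply: vmC; exact: (@sigma_algebra0 _ setT). Qed.

Lemma vmU n (c : 'I_n -> Prop) (F : 'I_n -> set ('I_K -> R)) :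
  (forall i, vm (F i)) -> vm [set p | exists i, c i /\ F i p].
Proof.
move=> hF.
pose A (m : nat) : set ('I_K -> R) :=
  if pselect (exists i : 'I_n, nat_of_ord i = m /\ c i) is left h
  then F (projT1 (cid h)) else set0.
have -> : [set p | exists i, c i /\ F i p] = \bigcup_m A m.
  apply/seteqP; split => p.
  - move=> [i [ci Fi]]; exists (nat_of_ord i) => //.
    rewrite /A; case: pselect => [h|]; last by move=> abs; exfalso; apply: abs; exists i.
    case: (cid h) => j [/= ji _]; by have -> : j = i by apply: val_inj.
  - move=> [m _]; rewrite /A; case: pselect => [h|//].
    by case: (cid h) => j [/= _ cj] Fj; exists j.
rewrite /vec_measurable; apply: sigma_algebra_bigcup => m; rewrite /A; case: pselect => [h|_] //.
  exact: hF. exact: (@sigma_algebra0 _ setT).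
Qed.

Lemma vm1 (v : 'I_K -> R) : vm [set v].
Proof.
have -> : [set v] = ~` [set p | exists k : 'I_K, True /\ (~` [set q | q k = v k]) p].
  apply/seteqP; split => p /=.
  - by move=> -> [k [_ /= ]].
  - move=> h; apply/funext => k; apply: contrapT => nk; apply: h; by exists k.
apply: vmC; apply: vmU => k; apply: vmC.
exact (@vmG k [set v k] (measurable_set1 (v k))).
Qed.

End VM.
Lemma bigU_mem (T : Type) n (c : pred 'I_n) (F : 'I_n -> set T) t :
  (\big[setU/set0]_(i < n | c i) F i) t <-> exists i, c i /\ F i t.
Proof.
rewrite -bigcup_seq_cond; split => [[i /andP[_ ci] Fi]|[i [ci Fi]]].
  by exists i.
by exists i => //; apply/andP; split => //; rewrite mem_index_enum.
Qed.

Section P5.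
Variables (R : realType) (K J : nat) (d : measure_display) (T : measurableType d)
  (P : probability T R) (S : T -> 'I_K -> R) (B : 'I_J -> set ('I_K -> R)).
Hypothesis mS : forall k, measurable_fun setT (fun t => S t k).
Hypothesis simS : forall t, simplex (S t).
Hypothesis HB : simplex_partition B.

Local Notation SB := (binned P B S).
Local Notation b i := (bin_mean P S (B i)).
Local Notation E i := (S @^-1` B i).

Lemma measS V : @vec_measurable R K V -> measurable (S @^-1` V).
Proof.
move=> hV.
have sX : sigma_algebra setT (image_set_system setT S measurable).
  exact: sigma_algebra_image (sigma_algebra_measurable T).
suff : image_set_system setT S measurable V by rewrite /image_set_system /= setTI.
apply: (smallest_sub sX) hV => W [k _ [A mA <-]].
rewrite /image_set_system /= setTI.
have -> : S @^-1` (setT `&` (fun p => p k) @^-1` A) = setT `&` (fun t => S t k) @^-1` A.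
  by apply/seteqP; split => t /=; rewrite /preimage /= => -[_ h].
exact: mS.
Qed.

Lemma Hex t : exists j, B j (S t).
Proof. by case: HB => _ _ _ /(_ _ (simS t)) [j _ h]; exists j. Qed.

Lemma Huniq i j p : B i p -> B j p -> i = j.
Proof.
move=> hi hj; case: (eqVneq i j) => // nij.
by case: HB => _ _ /(_ _ _ nij) /seteqP [/(_ p (conj hi hj))] .
Qed.

Lemma HSB t j : B j (S t) -> SB t = b j.
Proof.
move=> hj; apply/funext => k; rewrite /binned (bigD1 j) //= big1.
  by rewrite indicE mem_set // mul1r addr0.
move=> i nij; rewrite indicE memNset ?mul0r //= => hi.
by move/eqP: nij; apply; apply: Huniq hi hj.
Qed.

Lemma Hpre V : SB @^-1` V = S @^-1` [set p | exists i, V (b i) /\ B i p].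
Proof.
apply/seteqP; split => t /=.
  by case: (Hex t) => j hj; rewrite (HSB _ _ hj) => Vb; exists j.
by move=> [i [Vb hi]]; rewrite (HSB _ _ hi).
Qed.

Lemma vmB i : @vec_measurable R K (B i).
Proof. by case: HB. Qed.

Lemma measSB V : measurable (SB @^-1` V).
Proof. rewrite Hpre; apply: measS; apply: vmU => i; exact: vmB. Qed.

Lemma sigSB_meas A : sigma_vec SB A -> measurable A.
Proof. by move=> [V _ <-]; rewrite setTI; exact: measSB. Qed.

Lemma sigS_meas A : sigma_vec S A -> measurable A.
Proof. by move=> [V hV <-]; rewrite setTI; exact: measS. Qed.

Lemma sigSB_level v : sigma_vec SB (SB @^-1` [set v]).
Proof. by exists [set v]; [exact: vm1 | rewrite setTI]. Qed.

Lemma sigS_level v : sigma_vec S (SB @^-1` [set v]).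
Proof.
exists [set p | exists i, [set v] (b i) /\ B i p]; last by rewrite setTI Hpre.
by apply: vmU => i; exact: vmB.
Qed.

Lemma cexp_const Y Z : is_cexp P (sigma_vec SB) Y Z ->
  forall t1 t2, SB t1 = SB t2 -> Z t1 = Z t2.
Proof.
move=> [hm _ _] t1 t2 e.
have [V _ hV] := hm _ (measurable_set1 (Z t1)).
have : (setT `&` SB @^-1` V) t1 by rewrite hV.
move=> [_ /=]; rewrite e => h2.
have : (setT `&` SB @^-1` V) t2 by [].
by rewrite hV => -[_ /= ->].
Qed.

Lemma cexp_meas G Y Z : (forall A, G A -> measurable A) -> is_cexp P G Y Z ->
  measurable_fun setT Z.
Proof. by move=> hG [hm _ _] _ A mA; apply: hG; apply: hm. Qed.


Lemma boundedP (A : set T) (f : T -> R) c : (forall x, `|f x| <= c) ->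
  [bounded f x | x in A].
Proof.
move=> h; have := nbhs_pinfty_ge (num_real c).
by apply: filterS => M cM x _ /=; exact: le_trans (h x) cM.
Qed.

Lemma S_ge0 t k : 0 <= S t k.
Proof. by case: (simS t). Qed.

Lemma S_le1 t k : S t k <= 1.
Proof.
case: (simS t) => h0 h1; rewrite -h1 (bigD1 k) //= lerDl sumr_ge0 // => i _.
Qed.

Lemma S_norm t k : `|S t k| <= 1.
Proof. by rewrite ger0_norm ?S_ge0 ?S_le1. Qed.

Lemma mE i : measurable (E i).
Proof. exact: measS (vmB i). Qed.

Lemma mSk A k : measurable_fun A (fun x => (S x k)%:E).
Proof. apply/measurable_EFinP; exact: measurable_funTS (mS k). Qed.

Lemma intS_bound A k : measurable A ->
  (0 <= \int[P]_(x in A) (S x k)%:E)%E /\ (\int[P]_(x in A) (S x k)%:E <= P A)%E.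
Proof.
move=> mA; split; first by apply: integral_ge0 => x _; rewrite lee_fin S_ge0.
rewrite -[X in (_ <= X)%E]mul1e -integral_cst //.
apply: ge0_le_integral => //.
- by move=> x _; rewrite lee_fin S_ge0.
- exact: mSk.
- by move=> x _; rewrite /cst lee_fin S_le1.
Qed.

Lemma Pfin A : measurable A -> P A \is a fin_num.
Proof.
move=> mA; rewrite ge0_fin_numE // (le_lt_trans (probability_le1 _ mA)) //.
exact: ltey.
Qed.

Lemma ediv_aux (I p : \bar R) : (0 <= I)%E -> (I <= p)%E -> p \is a fin_num ->
  I = ((fine I / fine p)%:E * p)%E.
Proof.
move: I p => [x| |] [y| |] //=; rewrite ?lee_fin => h0 h1 _.
rewrite -EFinM; congr EFin; case: (eqVneq y 0) => y0; last by rewrite divfK.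
rewrite y0 mulr0; apply/eqP; rewrite eq_le h0 andbT; by rewrite -y0.
Qed.

Lemma binE i k : (\int[P]_(x in E i) (S x k)%:E = (b i k)%:E * P (E i))%E.
Proof.
have [h0 h1] := intS_bound _ k (mE i).
rewrite /bin_mean; apply: ediv_aux => //; exact: Pfin _ (mE i).
Qed.

Lemma trivE (D : set 'I_J) : trivIset D (fun i => E i).
Proof. by move=> i j _ _ [t [hi hj]]; exact: Huniq hi hj. Qed.

Lemma levelE t0 k :
  (\int[P]_(x in SB @^-1` [set SB t0]) (S x k)%:E =
  (SB t0 k)%:E * P (SB @^-1` [set SB t0]))%E.
Proof.
set v := SB t0; pose c := fun i => `[< b i = v >].
have LE : SB @^-1` [set v] = \big[setU/set0]_(i < J | c i) E i.
  rewrite Hpre; apply/seteqP; split => t /=.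
  - by move=> [i [bv hi]]; apply/bigU_mem; exists i; split => //; exact/asboolP.
  - by move/bigU_mem => [i [/asboolP ci hi]]; exists i.
rewrite LE measure_bigsetU_ord_cond; last 2 first.
- by move=> i _; exact: mE.
- exact: trivE.
set s := [seq i <- index_enum 'I_J | c i].
have e1 : \big[setU/set0]_(i < J | c i) E i = \big[setU/set0]_(i <- s) E i.
  by rewrite big_filter.
have e2 : (\sum_(i < J | c i) P (E i) = \sum_(i <- s) P (E i))%E.
  by rewrite big_filter.
rewrite e1 e2 ge0_integral_bigsetU //.
- rewrite ge0_sume_distrr; last by move=> i _; exact: measure_ge0.
  rewrite big_seq [RHS]big_seq; apply: eq_bigr => i.
  by rewrite mem_filter => /andP[/asboolP ci _]; rewrite binE ci.
- exact: mE.
- by rewrite filter_uniq // index_enum_uniq.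
- exact: trivE.
- exact: mSk.
- by move=> x _; rewrite lee_fin S_ge0.
Qed.

Lemma key (Q C CB M : T -> 'I_K -> R) :
  is_cexp_vec P (sigma_vec S) Q C ->
  is_cexp_vec P (sigma_vec SB) Q CB ->
  is_cexp_vec P (sigma_vec SB) (fun t => vsub (S t) (C t)) M ->
  forall t0, P (SB @^-1` [set SB t0]) != 0%E ->
  forall k, M t0 k = SB t0 k - CB t0 k.
Proof.
move=> hC hCB hM t0 Pn0 k.
set L := SB @^-1` [set SB t0].
have mL : measurable L := measSB _.
have cst_int (Z : T -> R) Y : is_cexp P (sigma_vec SB) Y Z ->
    (\int[P]_(x in L) (Z x)%:E = (Z t0)%:E * P L)%E.
  move=> hZ; rewrite -integral_cst //; apply: eq_integral => x /[!inE] Lx /=.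
  by congr EFin; exact: (cexp_const _ _ hZ _ _ Lx).
have h1 := cst_int _ _ (hM k).
have h5 := cst_int _ _ (hCB k).
case: (hM k) => _ _ /(_ L (sigSB_level _)) h2.
case: (hC k) => _ hCi /(_ L (sigS_level _)) h3.
case: (hCB k) => _ _ /(_ L (sigSB_level _)) h4.
have intS : P.-integrable L (EFin \o (fun x => S x k)).
  apply: measurable_bounded_integrable => //.
  - by rewrite -ge0_fin_numE // Pfin.
  - exact: measurable_funTS (mS k).
  - by apply: (@boundedP _ _ 1) => x; exact: S_norm.
have intC : P.-integrable L (EFin \o (fun x => C x k)).
  exact: integrableS measurableT mL (subsetT _) hCi.
have hB : (\int[P]_(x in L) (vsub (S x) (C x) k)%:E =
    \int[P]_(x in L) (S x k)%:E - \int[P]_(x in L) (C x k)%:E)%E.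
  by rewrite -integralB_EFin //; apply: eq_integral => x _; rewrite EFinB.
have : ((M t0 k)%:E * P L = (SB t0 k)%:E * P L - (CB t0 k)%:E * P L)%E.
  by rewrite -h1 -h2 hB levelE -h5 -h4 h3.
have PF := Pfin _ mL.
move=> h.
have {}h : M t0 k * fine (P L) = (SB t0 k - CB t0 k) * fine (P L).
  by apply: EFin_inj; rewrite mulrBl EFinB !EFinM fineK.
apply: mulIf h; apply: contra Pn0 => /eqP p0.
by rewrite -(fineK PF) p0.
Qed.


Lemma sqnorm_ge0 (p : 'I_K -> R) : 0 <= sqnorm p.
Proof. by apply: sumr_ge0 => k _; exact: sqr_ge0. Qed.

Lemma final (Q C CB M : T -> 'I_K -> R) (Wn : T -> R) :
  is_cexp_vec P (sigma_vec S) Q C ->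
  is_cexp_vec P (sigma_vec SB) Q CB ->
  is_cexp P (sigma_vec SB) (fun t => sqnorm (vsub (S t) (C t))) Wn ->
  is_cexp_vec P (sigma_vec SB) (fun t => vsub (S t) (C t)) M ->
  (\int[P]_x (sqnorm (vsub (SB x) (CB x)))%:E =
   \int[P]_x (sqnorm (vsub (S x) (C x)))%:E
   - \int[P]_x (Wn x - sqnorm (M x))%:E)%E.
Proof.
move=> hC hCB hW hM.
have mM k : measurable_fun setT (fun t => M t k).
  exact: (cexp_meas _ _ _ sigSB_meas (hM k)).
have mCB k : measurable_fun setT (fun t => CB t k).
  exact: (cexp_meas _ _ _ sigSB_meas (hCB k)).
have mSB k : measurable_fun setT (fun t => SB t k).
  move=> _ A mA; rewrite setTI; exact: (measSB [set p | A (p k)]).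
have msq (Z : T -> 'I_K -> R) : (forall k, measurable_fun setT (fun t => Z t k)) ->
    measurable_fun setT (fun t => sqnorm (Z t)).
  move=> hZ; rewrite /sqnorm; apply: measurable_sum => k; apply: measurable_funX.
  exact: hZ.
have mF1 : measurable_fun setT (fun x => sqnorm (vsub (SB x) (CB x))).
  by apply: msq => k; apply: measurable_funB.
have mF2 : measurable_fun setT (fun x => sqnorm (M x)) by exact: msq.
pose r j : T := if pselect (exists t, E j t) is left h then projT1 (cid h) else point.
have rE t j : E j t -> SB (r j) = SB t.
  move=> hj; rewrite /r; case: pselect => [h|[]]; last by exists t.
  by case: (cid h) => u hu /=; rewrite (HSB _ _ hu) (HSB _ _ hj).
have intF2 : P.-integrable setT (EFin \o (fun x => sqnorm (M x))).
  apply: measurable_bounded_integrable => //.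
    by rewrite -ge0_fin_numE // Pfin.
  apply: (@boundedP _ _ (\sum_j sqnorm (M (r j)))) => x.
  have [j hj] := Hex x.
  have eM : M x = M (r j).
    by apply/funext => k; apply: (cexp_const _ _ (hM k)); rewrite (rE _ _ hj).
  rewrite ger0_norm ?sqnorm_ge0 // eM (bigD1 j) //= lerDl sumr_ge0 // => i _.
  exact: sqnorm_ge0.
have ae : ae_eq P setT (fun x => (sqnorm (M x))%:E)
    (fun x => (sqnorm (vsub (SB x) (CB x)))%:E).
  pose N := SB @^-1` [set v | P (SB @^-1` [set v]) = 0%E].
  exists N; split.
  - exact: measSB.
  - pose c := fun i => `[< P (SB @^-1` [set b i]) = 0%E >].
    have -> : N = \big[setU/set0]_(i < J | c i) E i.
      rewrite /N Hpre; apply/seteqP; split => t /=.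
      - by move=> [i [bv hi]]; apply/bigU_mem; exists i; split => //; exact/asboolP.
      - by move/bigU_mem => [i [/asboolP ci hi]]; exists i.
    rewrite measure_bigsetU_ord_cond; last 2 first.
    + by move=> i _; exact: mE.
    + exact: trivE.
    apply: big1 => i /asboolP h0; apply/eqP; rewrite -measure_le0 -h0.
    apply: le_measure; rewrite ?inE; [exact: mE | exact: measSB |].
    by move=> t hi /=; rewrite (HSB _ _ hi).
  - move=> x /= hx; apply: contrapT => nN; apply: hx => _.
    have Pn0 : P (SB @^-1` [set SB x]) != 0%E by apply/eqP.
    congr EFin; apply: eq_bigr => k _; rewrite (key _ _ _ _ hC hCB hM _ Pn0).
    by [].
have mF1e : measurable_fun setT (fun x => (sqnorm (vsub (SB x) (CB x)))%:E).
  exact/measurable_EFinP.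
have mF2e : measurable_fun setT (fun x => (sqnorm (M x))%:E).
  exact/measurable_EFinP.
have e12 := ae_eq_integral _ _ measurableT mF2e mF1e ae.
have sT : sigma_vec SB setT.
  by exists setT; [exact: vmT | rewrite setTI preimage_setT].
case: hW => _ intW /(_ setT sT) eW.
have WF := integrable_fin_num measurableT intW.
have F2F := integrable_fin_num measurableT intF2.
have eB : (\int[P]_x (Wn x - sqnorm (M x))%:E =
    \int[P]_x (Wn x)%:E - \int[P]_x (sqnorm (M x))%:E)%E.
  by rewrite -integralB_EFin //; apply: eq_integral => x _; rewrite EFinB.
rewrite -e12 eW eB.
move: WF F2F.
set a := (\int[P]_x (Wn x)%:E)%E; set y := (\int[P]_x (sqnorm (M x))%:E)%E.
move: a y => [a| |] [y| |] //= _ _.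
by rewrite -!EFinB opprB addrC subrK.
Qed.
End P5.

Theorem proposition5 (R : realType) (K J : nat)
  (d : measure_display) (T : measurableType d) (P : probability T R)
  (dX : measure_display) (Xs : measurableType dX)
  (X : T -> Xs) (Y : T -> 'I_K) (f : Xs -> 'I_K -> R)
  (Q C C_B M : T -> 'I_K -> R) (Wn : T -> R)
  (B : 'I_J -> set ('I_K -> R)) :
  measurable_fun setT X ->
  (forall k, measurable (Y @^-1` [set k])) ->
  (forall k, measurable_fun setT (fun x => f x k)) ->
  (forall x, simplex (f x)) ->
  (* Q_k = P(Y = e_k | X) *)
  is_cexp_vec P (sigma_rv X) (fun t k => \1_(Y @^-1` [set k]) t) Q ->
  simplex_partition B ->
  let S := fun t => f (X t) in
  let S_B := binned P B S in
  (* C = E[Q | S],  C_B = E[Q | S_B] *)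
  is_cexp_vec P (sigma_vec S) Q C ->
  is_cexp_vec P (sigma_vec S_B) Q C_B ->
  (* Var_h(S - C | S_B) = Wn - ||M||^2 with Wn = E[||S-C||^2 | S_B], M = E[S - C | S_B] *)
  is_cexp P (sigma_vec S_B) (fun t => sqnorm (vsub (S t) (C t))) Wn ->
  is_cexp_vec P (sigma_vec S_B) (fun t => vsub (S t) (C t)) M ->
  (\int[P]_x (sqnorm (vsub (S_B x) (C_B x)))%:E =
   \int[P]_x (sqnorm (vsub (S x) (C x)))%:E
   - \int[P]_x (Wn x - sqnorm (M x))%:E)%E.
Proof.
move=> hX hY hf hsim hQ HB S S_B hC hCB hW hM.
have mS k : measurable_fun setT (fun t => S t k).
  exact: (measurableT_comp (hf k) hX).
have simS t : simplex (S t) by exact: hsim.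
exact: (@final R K J d T P S B mS simS HB Q C C_B M Wn hC hCB hW hM).
Qed.
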